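(* Let $\delta_1,\delta_2>0$, $0<\lambda<\tfrac12$, $0<\alpha_1<1-2\lambda$ and $1-2\lambda<\alpha_2<1$, and consider the ODEs on $\mathbb{R}^3_+=\{(x_1,x_2,s):x_1,x_2,s>0\}$ $$\dot x_j=\delta_j\frac{s-\lambda}{s+\alpha_j}x_j\ (j=1,2),\qquad \dot s=s(1-s)-\frac{s}{s+\alpha_1}x_1-\frac{s}{s+\alpha_2}x_2.$$ These possess the line of equilibria $L=\{(x_1,x_2,\lambda)\in\mathbb{R}^3_+: \frac{x_1}{\lambda+\alpha_1}+\frac{x_2}{\lambda+\alpha_2}=1-\lambda\}$. Then the point $$X_H=\left(\frac{(\lambda+\alpha_1)^2(2\lambda+\alpha_2-1)}{\alpha_2-\alpha_1},\ \frac{(\lambda+\alpha_2)^2(1-2\lambda-\alpha_1)}{\alpha_2-\alpha_1},\ \lambda\right)\in L$$ is an elliptic Hopf point.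
   Context: A point $X_H$ on a line of equilibria $L$ of a smooth 3-dimensional ODE is a Hopf point if, after an affine linear change of coordinates $X=(y,z)\in\mathbb{R}^2\times\mathbb{R}$ placing $X_H$ at the origin and $L$ on $\{y=0\}$, the vector field $F=(f^y,f^z)$ satisfies $F(0,z)=0$ for all $z$, its Jacobian at the origin is $\begin{pmatrix}0&-\omega&0\\ \omega&0&0\\0&0&0\end{pmatrix}$ for some $\omega>0$, and $\partial_z(\partial_{y_1}f^{y_1}+\partial_{y_2}f^{y_2})(0,0)\neq0$. It is called elliptic if in addition $\Delta_yf^z(0,0)\neq0$ (with $\Delta_y=\partial_{y_1}^2+\partial_{y_2}^2$) and the discriminant $\xi=\mathrm{sign}\big(\partial_z(\partial_{y_1}f^{y_1}+\partial_{y_2}f^{y_2})(0,0)\cdot\Delta_yf^z(0,0)\big)$ equals $-1$ (hyperbolic if $\xi=1$). *)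

(* Defs.v *)
From Stdlib Require Import Reals.
From Coquelicot Require Import Coquelicot.
Open Scope R_scope.

Definition vec3 := (R * R * R)%type.

Definition vadd (u v : vec3) : vec3 :=
  let '(u1, u2, u3) := u in let '(v1, v2, v3) := v in (u1 + v1, u2 + v2, u3 + v3).
Definition vsub (u v : vec3) : vec3 :=
  let '(u1, u2, u3) := u in let '(v1, v2, v3) := v in (u1 - v1, u2 - v2, u3 - v3).

Record mat3 := Mat3 {
  a11 : R; a12 : R; a13 : R;
  a21 : R; a22 : R; a23 : R;
  a31 : R; a32 : R; a33 : R }.

Definition mv (A : mat3) (u : vec3) : vec3 :=
  let '(u1, u2, u3) := u in
  (a11 A * u1 + a12 A * u2 + a13 A * u3,
   a21 A * u1 + a22 A * u2 + a23 A * u3,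
   a31 A * u1 + a32 A * u2 + a33 A * u3).

Definition inverse_mats (A B : mat3) : Prop :=
  (forall v, mv B (mv A v) = v) /\ (forall v, mv A (mv B v) = v).

Definition transformed (F : vec3 -> vec3) (A B : mat3) (XH : vec3) (u : vec3) : vec3 :=
  mv B (F (vadd (mv A u) XH)).

Definition comp1 (v : vec3) : R := let '(a, _, _) := v in a.
Definition comp2 (v : vec3) : R := let '(_, b, _) := v in b.
Definition comp3 (v : vec3) : R := let '(_, _, c) := v in c.

Definition gcomp (G : vec3 -> vec3) (i : nat) (y1 y2 z : R) : R :=
  match i with
  | 1%nat => comp1 (G (y1, y2, z))
  | 2%nat => comp2 (G (y1, y2, z))
  | _ => comp3 (G (y1, y2, z))
  end.

Definition d_y1 (g : R -> R -> R -> R) (y1 y2 z : R) : R := Derive (fun t => g t y2 z) y1.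
Definition d_y2 (g : R -> R -> R -> R) (y1 y2 z : R) : R := Derive (fun t => g y1 t z) y2.
Definition d_z  (g : R -> R -> R -> R) (y1 y2 z : R) : R := Derive (fun t => g y1 y2 t) z.

Definition dz_div_y (G : vec3 -> vec3) : R :=
  d_z (fun y1 y2 z => d_y1 (gcomp G 1) y1 y2 z + d_y2 (gcomp G 2) y1 y2 z) 0 0 0.

Definition lap_y_gz (G : vec3 -> vec3) : R :=
  d_y1 (d_y1 (gcomp G 3)) 0 0 0 + d_y2 (d_y2 (gcomp G 3)) 0 0 0.

Definition hopf_conditions (G : vec3 -> vec3) : Prop :=
  (forall z, G (0, 0, z) = (0, 0, 0)) /\
  (exists omega : R, 0 < omega /\
     d_y1 (gcomp G 1) 0 0 0 = 0 /\ d_y2 (gcomp G 1) 0 0 0 = - omega /\ d_z (gcomp G 1) 0 0 0 = 0 /\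
     d_y1 (gcomp G 2) 0 0 0 = omega /\ d_y2 (gcomp G 2) 0 0 0 = 0 /\ d_z (gcomp G 2) 0 0 0 = 0 /\
     d_y1 (gcomp G 3) 0 0 0 = 0 /\ d_y2 (gcomp G 3) 0 0 0 = 0 /\ d_z (gcomp G 3) 0 0 0 = 0) /\
  dz_div_y G <> 0.

(* Affine change of coordinates X = A u + XH placing XH at the origin and
   the line of equilibria L on {y = 0}. *)
Definition admissible_change (L : vec3 -> Prop) (XH : vec3) (A B : mat3) : Prop :=
  inverse_mats A B /\
  (forall p, L p -> comp1 (mv B (vsub p XH)) = 0 /\ comp2 (mv B (vsub p XH)) = 0).

Definition hopf_point (F : vec3 -> vec3) (L : vec3 -> Prop) (XH : vec3) : Prop :=
  L XH /\
  exists A B : mat3, admissible_change L XH A B /\ hopf_conditions (transformed F A B XH).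

(* elliptic: discriminant xi = sign(dz_div_y * lap_y_gz) = -1 (and lap_y_gz <> 0) *)
Definition elliptic_hopf_point (F : vec3 -> vec3) (L : vec3 -> Prop) (XH : vec3) : Prop :=
  L XH /\
  exists A B : mat3, admissible_change L XH A B /\
    hopf_conditions (transformed F A B XH) /\
    lap_y_gz (transformed F A B XH) <> 0 /\
    dz_div_y (transformed F A B XH) * lap_y_gz (transformed F A B XH) < 0.

Definition chemostat_field (d1 d2 lam al1 al2 : R) (X : vec3) : vec3 :=
  let '(x1, x2, s) := X in
  (d1 * ((s - lam) / (s + al1)) * x1,
   d2 * ((s - lam) / (s + al2)) * x2,
   s * (1 - s) - s / (s + al1) * x1 - s / (s + al2) * x2).

Definition equilibria_line (lam al1 al2 : R) (X : vec3) : Prop :=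
  let '(x1, x2, s) := X in
  0 < x1 /\ 0 < x2 /\ 0 < s /\ s = lam /\ x1 / (lam + al1) + x2 / (lam + al2) = 1 - lam.

Definition hopf_candidate (lam al1 al2 : R) : vec3 :=
  ((lam + al1) ^ 2 * (2 * lam + al2 - 1) / (al2 - al1),
   (lam + al2) ^ 2 * (1 - 2 * lam - al1) / (al2 - al1),
   lam).

(* Main.v *)
Require Import Defs.
From Stdlib Require Import Reals Lra Psatz.
From Coquelicot Require Import Coquelicot.
Open Scope R_scope.

Ltac unf := unfold d_y1, d_y2, d_z, gcomp;
  cbv beta iota zeta delta [transformed chemostat_field mv vadd comp1 comp2 comp3
     a11 a12 a13 a21 a22 a23 a31 a32 a33].

Ltac pos := repeat (first [lra | apply Rmult_lt_0_compat | apply Rinv_0_lt_compat | apply Rdiv_lt_0_compat | apply Rplus_lt_0_compat]).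
Ltac nz := repeat split; try first [intro; lra | apply Rgt_not_eq; unfold Rgt; pos; fail | apply Rlt_not_eq; lra | intro; nra].
Ltac dcomp := unf; apply is_derive_unique; auto_derive; [nz | ].
Ltac unE := repeat match goal with x := _ |- _ => subst x end.
Ltac fin h1 h2 := unE; first [field; nz; fail | rewrite ?h1, ?h2; field; nz; fail | idtac].

Lemma main (d1 d2 lam al1 al2 om c1 c2 : R)
  (hd1 : 0 < d1) (hd2 : 0 < d2) (hlam0 : 0 < lam) (hlam1 : lam < 1 / 2)
  (hal10 : 0 < al1) (hal11 : al1 < 1 - 2 * lam)
  (hal20 : 1 - 2 * lam < al2) (hal21 : al2 < 1)
  (hc1 : c1 = (lam + al1) ^ 2 * (2 * lam + al2 - 1) / (al2 - al1))
  (hc2 : c2 = (lam + al2) ^ 2 * (1 - 2 * lam - al1) / (al2 - al1))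
  (hom : 0 < om)
  (hom2 : om * om = lam * (d1 * c1 / ((lam + al1) * (lam + al1)) + d2 * c2 / ((lam + al2) * (lam + al2)))) :
  elliptic_hopf_point (chemostat_field d1 d2 lam al1 al2)
    (equilibria_line lam al1 al2) (c1, c2, lam).
Proof.
  assert (ha1 : 0 < lam + al1) by lra.
  assert (ha2 : 0 < lam + al2) by lra.
  assert (hc1p : 0 < c1).
  { rewrite hc1. apply Rdiv_lt_0_compat; [|lra]. apply Rmult_lt_0_compat; [nra|lra]. }
  assert (hc2p : 0 < c2).
  { rewrite hc2. apply Rdiv_lt_0_compat; [|lra]. apply Rmult_lt_0_compat; [nra|lra]. }
  assert (hp1 : 0 < d1 * c1 / (lam + al1)).
  { apply Rdiv_lt_0_compat; [nra|lra]. }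
  assert (hp2 : 0 < d2 * c2 / (lam + al2)).
  { apply Rdiv_lt_0_compat; [nra|lra]. }
  assert (hE : 0 < d1 * c1 / (lam + al1) * (lam + al2) + d2 * c2 / (lam + al2) * (lam + al1)) by nra.
  assert (hline : c1 / (lam + al1) + c2 / (lam + al2) = 1 - lam).
  { rewrite hc1, hc2. field. lra. }
  assert (hds : 1 - 2 * lam - c1 * al1 / ((lam + al1) * (lam + al1)) - c2 * al2 / ((lam + al2) * (lam + al2)) = 0).
  { rewrite hc1, hc2. field. lra. }
  assert (h12 : al1 < al2) by lra.
  set (E := d1 * c1 / (lam + al1) * (lam + al2) + d2 * c2 / (lam + al2) * (lam + al1)) in *.
  pose (A := Mat3 (d1 * c1 / (lam + al1)) 0 (lam + al1)
               (d2 * c2 / (lam + al2)) 0 (-(lam + al2))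
               0 (- om) 0).
  pose (B := Mat3 ((lam + al2) / E) ((lam + al1) / E) 0
               0 0 (-1 / om)
               ((d2 * c2 / (lam + al2)) / E) (- (d1 * c1 / (lam + al1)) / E) 0).
  pose (G := transformed (chemostat_field d1 d2 lam al1 al2) A B (c1, c2, lam)).
  assert (Hdz : dz_div_y G = al2 / (lam + al2) - al1 / (lam + al1)).
  { unfold dz_div_y, d_z.
    rewrite (Derive_ext _ (fun t => - t * (al1 / (lam + al1) - al2 / (lam + al2)))).
    - apply is_derive_unique; auto_derive; [nz|]. field. nz.
    - intro t. unE. unf.
      rewrite (is_derive_unique _ _ 0).
      2: { auto_derive; [nz|]. fin hc1 hc2. }
      rewrite Rplus_0_l. apply is_derive_unique.
      auto_derive; [nz|]. fin hc1 hc2. }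
  assert (Hlap : lap_y_gz G = 2 * (d1 * d2 * c1 * c2 / E) * (om * om) * ((lam + al1) - (lam + al2))
                    / ((lam + al1) * (lam + al1) * (lam + al2) * (lam + al2))).
  { unfold lap_y_gz, d_y1, d_y2.
    rewrite (Derive_ext (fun t => Derive (fun u => gcomp G 3 u 0 0) t) (fun _ => 0)).
    2: { intro t. unE. unf. apply is_derive_unique; auto_derive; [nz|]. fin hc1 hc2. }
    rewrite Derive_const, Rplus_0_l.
    rewrite (Derive_ext_loc _ (fun t => (d1 * d2 * c1 * c2 / E) * (- om) *
        ((lam + al1) / ((lam + al2) * ((lam + al1 - om * t) * (lam + al1 - om * t)))
         - (lam + al2) / ((lam + al1) * ((lam + al2 - om * t) * (lam + al2 - om * t)))))).
    - apply is_derive_unique; auto_derive; [nz|]. unE. field. nz.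
    - assert (Heps : 0 < (lam + al1) / om) by (apply Rdiv_lt_0_compat; lra).
      exists (mkposreal _ Heps). intros t Ht.
      unfold ball in Ht; simpl in Ht; unfold AbsRing_ball, abs, minus, plus, opp in Ht; simpl in Ht.
      rewrite Ropp_0, Rplus_0_r in Ht. apply Rabs_def2 in Ht. destruct Ht as [Ht1 Ht2].
      assert (Hot : om * t < lam + al1).
      { apply (Rmult_lt_compat_l om) in Ht1; [|lra].
        replace (om * ((lam + al1) / om)) with (lam + al1) in Ht1 by (field; lra). lra. }
      assert (Hot' : - (lam + al1) < om * t).
      { apply (Rmult_lt_compat_l om) in Ht2; [|lra].
        replace (om * - ((lam + al1) / om)) with (- (lam + al1)) in Ht2 by (field; lra). lra. }
      unE. unf. apply is_derive_unique; auto_derive; [nz|]. field. nz. }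
  split.
  { unfold equilibria_line. repeat split; lra. }
  exists A, B.
  split; [split; [split|]|].
  { intros [[v1 v2] v3]. unE. cbv beta iota zeta delta [mv a11 a12 a13 a21 a22 a23 a31 a32 a33].
    f_equal; [f_equal|]; field; nz. }
  { intros [[v1 v2] v3]. unE. cbv beta iota zeta delta [mv a11 a12 a13 a21 a22 a23 a31 a32 a33].
    f_equal; [f_equal|]; field; nz. }
  { intros [[x1 x2] s] [h1 [h2 [h3 [h4 h5]]]]. subst s. unfold A, B.
    cbv beta iota zeta delta [vsub mv comp1 comp2 a11 a12 a13 a21 a22 a23 a31 a32 a33].
    split.
    - assert (Hx : x1 = (lam + al1) * ((1 - lam) - x2 / (lam + al2))).
      { rewrite <- h5. field. nz. }
      assert (Hc : c1 = (lam + al1) * ((1 - lam) - c2 / (lam + al2))).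
      { rewrite <- hline. field. nz. }
      rewrite Hx, Hc. field. nz.
    - field. nz. }
  fold G. rewrite Hdz, Hlap.
  split; [split; [|split]|].
  { intros z. unE. unf. rewrite ?hc1, ?hc2. f_equal; [f_equal|]; field; nz. }
  { exists om. split; [exact hom|].
    repeat split; unE; dcomp; fin hc1 hc2.
    apply Rmult_eq_reg_r with om; [|nz]. rewrite hom2. field. nz. }
  { rewrite Hdz. replace (al2 / (lam + al2) - al1 / (lam + al1)) with (lam * (al2 - al1) / ((lam + al1) * (lam + al2))) by (field; nz).
    apply Rgt_not_eq. unfold Rgt. pos. }
  assert (hD : 0 < al2 / (lam + al2) - al1 / (lam + al1)).
  { replace (al2 / (lam + al2) - al1 / (lam + al1)) with (lam * (al2 - al1) / ((lam + al1) * (lam + al2))) by (field; nz).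
    pos. }
  assert (hK : 0 < d1 * d2 * c1 * c2 / E) by pos.
  assert (hP : 0 < 2 * (d1 * d2 * c1 * c2 / E) * (om * om) * ((lam + al2) - (lam + al1))
                    / ((lam + al1) * (lam + al1) * (lam + al2) * (lam + al2))) by pos.
  set (V := 2 * (d1 * d2 * c1 * c2 / E) * (om * om) * ((lam + al1) - (lam + al2))
                    / ((lam + al1) * (lam + al1) * (lam + al2) * (lam + al2))).
  assert (hV : V < 0).
  { unfold V. match type of hP with 0 < ?P => replace (2 * (d1 * d2 * c1 * c2 / E) * (om * om) * ((lam + al1) - (lam + al2))
                    / ((lam + al1) * (lam + al1) * (lam + al2) * (lam + al2))) with (- P) by (field; nz) end.
    lra. }
  split.
  - apply Rlt_not_eq. exact hV.
  - set (D := al2 / (lam + al2) - al1 / (lam + al1)) in *. nra.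
Qed.

Theorem lemma1 (d1 d2 lam al1 al2 : R)
  (hd1 : 0 < d1) (hd2 : 0 < d2) (hlam0 : 0 < lam) (hlam1 : lam < 1 / 2)
  (hal10 : 0 < al1) (hal11 : al1 < 1 - 2 * lam)
  (hal20 : 1 - 2 * lam < al2) (hal21 : al2 < 1) :
  elliptic_hopf_point (chemostat_field d1 d2 lam al1 al2)
    (equilibria_line lam al1 al2) (hopf_candidate lam al1 al2).
Proof.
  set (c1 := (lam + al1) ^ 2 * (2 * lam + al2 - 1) / (al2 - al1)).
  set (c2 := (lam + al2) ^ 2 * (1 - 2 * lam - al1) / (al2 - al1)).
  assert (ha1 : 0 < lam + al1) by lra.
  assert (ha2 : 0 < lam + al2) by lra.
  assert (hc1p : 0 < c1).
  { apply Rdiv_lt_0_compat; [|lra]. apply Rmult_lt_0_compat; [nra|lra]. }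
  assert (hc2p : 0 < c2).
  { apply Rdiv_lt_0_compat; [|lra]. apply Rmult_lt_0_compat; [nra|lra]. }
  set (W := lam * (d1 * c1 / ((lam + al1) * (lam + al1)) + d2 * c2 / ((lam + al2) * (lam + al2)))).
  assert (hW : 0 < W) by (unfold W; pos).
  change (hopf_candidate lam al1 al2) with (c1, c2, lam).
  apply (main d1 d2 lam al1 al2 (sqrt W) c1 c2); try assumption; try reflexivity.
  { apply sqrt_lt_R0. exact hW. }
  { change (sqrt W * sqrt W = W). apply sqrt_sqrt. lra. }
Qed.
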